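(* Let $E$ be a complex vector space of dimension $e$, let $U$ be a complex orthogonal vector space of dimension $2k+1$ ($k\ge1$), let $\Delta$ be the spinor representation of $\mathfrak{so}(U)$, and let $V=\operatorname{Sym}(E\otimes U)\otimes\Delta$, with $\mathfrak{g}=\mathfrak{so}(U)$ acting diagonally and $H=\mathfrak{gl}(E)$ acting on $E$. Write $U=\mathbf{C}\oplus(U_1\oplus U_1^* )\oplus\cdots\oplus(U_k\oplus U_k^* )$ with isotropic lines $U_i,U_i^*$ paired by the form, a non-isotropic line $\mathbf{C}$, summands mutually orthogonal; the Cartan subalgebra of $\mathfrak{so}(U)$ consists of elements preserving each line, with weights identified with $k$-tuples via $\varepsilon_i$ = weight on $U_i$. Let $I_k=\{0,1\}^k$ and for $n\in\mathbf{Z}$ let $L_n=\bigoplus_{d\ge0}\operatorname{Sym}^d(E)\otimes\operatorname{Sym}^{d+n}(E)$ (with $\operatorname{Sym}^m=0$ for $m<0$). Then for every $\chi\in(\tfrac12+\mathbf{Z})^k$, as $H$-representations, \[ V_\chi\cong\operatorname{Sym}(E)\otimes\bigoplus_{v\in I_k}L_{\chi_1+v_1-\frac12}\otimes\cdots\otimes L_{\chi_k+v_k-\frac12}. \]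
   Context: The weights of $\Delta$ (each of multiplicity one) are $v-(\tfrac12,\dots,\tfrac12)$ for $v\in\{0,1\}^k$. $V_\chi$ denotes the $\chi$-weight space of $V$. *)

(* Defs.v *)
(* Complex numbers = algC (algebraically closed, char 0). *)
From HB Require Import structures.
From mathcomp Require Import all_boot all_order all_algebra all_field.
From mathcomp Require Import mpoly.
Set Implicit Arguments. Unset Strict Implicit. Unset Printing Implicit Defensive.
Import Order.TTheory GRing.Theory Num.Theory.
Local Open Scope ring_scope.

(* Generic: polynomial algebra Sym(E (x) W) where E = C^e has basis     *)
(* e_0..e_{e-1} and W has a basis indexed by a finite type T.           *)
(* Variables x_(t,a) <-> the vector w_t (x) e_a in degree 1.           *)
Definition nvars (T : finType) (e : nat) := #|{: T * 'I_e}|.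

Definition SymEW (T : finType) (e : nat) := {mpoly algC[nvars T e]}.

Definition vidx (T : finType) (e : nat) (t : T) (a : 'I_e) : 'I_(nvars T e) :=
  enum_rank ((t, a) : T * 'I_e).

Definition xvar (T : finType) (e : nat) (t : T) (a : 'I_e) : SymEW T e :=
  'X_(vidx t a).

(* Action of X in gl(E) = 'M_e on Sym(E (x) W) (W carries the trivial
   gl(E)-action): the derivation extending  X.(e_b) = sum_a X a b e_a,
   i.e.  X.p = sum_(t,a,b) X a b * x_(t,a) * d p / d x_(t,b). *)
Definition symAct (T : finType) (e : nat) (X : 'M[algC]_e) (p : SymEW T e)
  : SymEW T e :=
  \sum_(t : T) \sum_(a < e) \sum_(b < e)
     X a b *: (xvar t a * mderiv (vidx t b) p).

Definition degIn (T : finType) (e : nat) (t : T) (m : 'X_{1..nvars T e}) : nat :=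
  \sum_(a < e) m (vidx t a).

(* Isomorphism of H = gl(E)-representations between (sub)spaces
   A of VT1 and B of VT2 (A, B assumed stable under the actions). *)
Definition Hiso (e : nat) (VT1 VT2 : lmodType algC)
    (act1 : 'M[algC]_e -> VT1 -> VT1) (act2 : 'M[algC]_e -> VT2 -> VT2)
    (A : VT1 -> Prop) (B : VT2 -> Prop) : Prop :=
  exists phi : VT1 -> VT2,
    [/\ forall x, A x -> B (phi x),
        forall y, B y -> exists2 x, A x & phi x = y,
        forall x y, A x -> A y -> phi x = phi y -> x = y,
        forall (c : algC) x y, A x -> A y -> phi (c *: x + y) = c *: phi x + phi y
      & forall X x, A x -> phi (act1 X x) = act2 X (phi x)].

(* U : orthogonal space of dim 2k+1, basis indexed by Ubasis k :          *)
(*   None          <-> spanning vector of the non-isotropic line C       *)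
(*   Some (i,false)<-> spanning vector of the isotropic line U_i         *)
(*   Some (i,true) <-> spanning vector of the isotropic line U_i^*       *)
Definition Ubasis (k : nat) := option ('I_k * bool).

(* Cartan element h_t of so(U), t : 'I_k -> C : acts by t_i on U_i,
   by -t_i on U_i^*, by 0 on C. *)
Definition cartanU (k : nat) (t : 'I_k -> algC) (u : Ubasis k) : algC :=
  match u with
  | None => 0
  | Some (i, false) => t i
  | Some (i, true) => - t i
  end.

(* Spinor representation Delta: basis e_v, v in I_k = {0,1}^k, with e_v of
   weight v - (1/2,...,1/2).  V = Sym(E (x) U) (x) Delta is modelled as
   the direct sum over the basis e_v of Delta of copies of Sym(E (x) U). *)
Definition Ik (k : nat) := {ffun 'I_k -> bool}.

Definition Vspace (k e : nat) := {ffun Ik k -> SymEW (Ubasis k) e}.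

Definition cartanAct (k e : nat) (t : 'I_k -> algC) (f : Vspace k e)
  : Vspace k e :=
  [ffun v => \sum_(u : Ubasis k) \sum_(a < e)
                 cartanU t u *: (xvar u a * mderiv (vidx u a) (f v))
             + (\sum_(i < k) ((v i)%:R - 2^-1) * t i) *: f v].

Definition Vact (k e : nat) (X : 'M[algC]_e) (f : Vspace k e) : Vspace k e :=
  [ffun v => symAct X (f v)].

Definition Vweight (k e : nat) (chi : 'I_k -> algC) (f : Vspace k e) : Prop :=
  forall t : 'I_k -> algC, cartanAct t f = (\sum_(i < k) chi i * t i) *: f.

(* Right hand side.  Sym(E) (x) L_{n_1} (x) ... (x) L_{n_k} modelled in    *)
(* the polynomial algebra Sym(E (x) W), W with basis indexed by Rbasis k: *)
(*   None           <-> the factor Sym(E)                                 *)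
(*   Some (i, 0)    <-> the factor Sym^d(E) of L_{n_i}                     *)
(*   Some (i, 1)    <-> the factor Sym^(d+n_i)(E) of L_{n_i}                *)
(* L_n = (+)_{d>=0} Sym^d(E) (x) Sym^{d+n}(E) (Sym^m = 0 for m < 0): its    *)
(* tensor product with the others is the span of the monomials m with     *)
(* deg_{(i,1)} m = deg_{(i,0)} m + n_i for every i.                       *)
Definition Rbasis (k : nat) := option ('I_k * 'I_2).

Definition inLtensor (k e : nat) (n : 'I_k -> algC) (p : SymEW (Rbasis k) e)
  : Prop :=
  forall m, m \in msupp p -> forall i : 'I_k,
    (degIn (Some (i, 1%R)) m)%:R = (degIn (Some (i, 0%R)) m)%:R + n i :> algC.

Definition Rspace (k e : nat) := {ffun Ik k -> SymEW (Rbasis k) e}.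

Definition Ract (k e : nat) (X : 'M[algC]_e) (f : Rspace k e) : Rspace k e :=
  [ffun v => symAct X (f v)].

Definition RHSsub (k e : nat) (chi : 'I_k -> algC) (f : Rspace k e) : Prop :=
  forall v : Ik k, inLtensor (fun i => chi i + (v i)%:R - 2^-1) (f v).

(* Main.v *)
Require Import Defs.
From HB Require Import structures.
From mathcomp Require Import all_boot all_order all_algebra all_field.
From mathcomp Require Import mpoly.
From mathcomp Require Import ring.
Import GRing.Theory Num.Theory.
Set Implicit Arguments. Unset Strict Implicit. Unset Printing Implicit Defensive.
Local Open Scope ring_scope.

Lemma big_optionS (T : finType) (F : option T -> algC) :
  \sum_(u : option T) F u = F None + \sum_(x : T) F (Some x).
Proof.
rewrite (bigD1 None) //=; congr (_ + _).
rewrite (reindex_omap Some (fun u => u)) /=; last by case.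
by apply: eq_bigl => x; rewrite eqxx.
Qed.

Lemma sum_delta (T : eqType) (s : seq T) (F : T -> algC) y :
  uniq s -> \sum_(x <- s) F x * (x == y)%:R = (y \in s)%:R * F y.
Proof.
elim: s => [|x s IH] /=; first by rewrite big_nil mul0r.
case/andP => xs us; rewrite big_cons IH // in_cons.
have [exy|nxy] := eqVneq x y.
  by rewrite -exy (negbTE xs) /= mulr1 mul0r addr0 mul1r.
by rewrite mulr0 add0r.
Qed.

Definition ren n1 n2 (g : 'I_n2 -> 'I_n1) (m : 'X_{1..n1}) : 'X_{1..n2} :=
  [multinom m (g i) | i < n2].

Lemma renE n1 n2 g m i : @ren n1 n2 g m i = m (g i).
Proof. by rewrite mnmE. Qed.

Definition rn n1 n2 (g : 'I_n2 -> 'I_n1) (p : {mpoly algC[n1]}) : {mpoly algC[n2]} :=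
  \sum_(m <- msupp p) p@_m *: 'X_[ren g m].

Lemma renK n1 n2 (g : 'I_n2 -> 'I_n1) h : cancel h g -> cancel (ren g) (ren h).
Proof. by move=> hg m; apply/mnmP => i; rewrite !renE hg. Qed.

Section RenTheory.
Variables (n1 n2 : nat) (g : 'I_n2 -> 'I_n1) (h : 'I_n1 -> 'I_n2).
Hypotheses (gh : cancel g h) (hg : cancel h g).

Lemma rn_coef p m' : (rn g p)@_m' = p@_(ren h m').
Proof.
rewrite /rn raddf_sum /=.
under eq_bigr => m _ do rewrite mcoeffZ mcoeffX.
have E : forall m, (ren g m == m') = (m == ren h m').
  by move=> m; apply/eqP/eqP => [<-|->]; rewrite ?(renK hg) ?(renK gh).
under eq_bigr => m _ do rewrite E.
rewrite sum_delta ?msupp_uniq //.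
case: (boolP (ren h m' \in msupp p)) => H; first by rewrite mul1r.
by rewrite mul0r memN_msupp_eq0.
Qed.

Lemma rnX m : rn g 'X_[m] = 'X_[ren g m].
Proof. by rewrite /rn msuppX big_seq1 mcoeffX eqxx scale1r. Qed.

Lemma rn_lin c p q : rn g (c *: p + q) = c *: rn g p + rn g q.
Proof. by apply/mpolyP => m; rewrite !(mcoeffD, mcoeffZ, rn_coef). Qed.

Lemma ren1 i : ren g U_(i)%MM = U_(h i)%MM.
Proof.
apply/mnmP => j; rewrite renE !mnm1E; congr nat_of_bool.
by apply/eqP/eqP => [->|<-]; rewrite ?gh ?hg.
Qed.

Lemma renD m1 m2 : ren g (m1 + m2)%MM = (ren g m1 + ren g m2)%MM.
Proof. by apply/mnmP => j; rewrite renE !mnmDE !renE. Qed.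

Lemma renB m1 m2 : ren g (m1 - m2)%MM = (ren g m1 - ren g m2)%MM.
Proof. by apply/mnmP => j; rewrite renE !mnmBE !renE. Qed.

End RenTheory.

Lemma rnK n1 n2 (g : 'I_n2 -> 'I_n1) h : cancel g h -> cancel h g ->
  cancel (rn g) (rn h).
Proof.
move=> gh hg p; apply/mpolyP => m.
by rewrite (rn_coef hg gh) (rn_coef gh hg) (renK hg).
Qed.

Definition islin n1 n2 (f : {mpoly algC[n1]} -> {mpoly algC[n2]}) :=
  forall c x y, f (c *: x + y) = c *: f x + f y.

Lemma lin0 n1 n2 (f : {mpoly algC[n1]} -> {mpoly algC[n2]}) : islin f -> f 0 = 0.
Proof.
move=> hf; have := hf 1 0 0; rewrite scaler0 addr0 scale1r => E.
by apply: (addrI (f 0)); rewrite addr0 -E.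
Qed.

Lemma linZ n1 n2 (f : {mpoly algC[n1]} -> {mpoly algC[n2]}) c x : islin f -> f (c *: x) = c *: f x.
Proof. by move=> hf; have := hf c x 0; rewrite !addr0 (lin0 hf) addr0. Qed.

Lemma lin_sum n1 n2 (f : {mpoly algC[n1]} -> {mpoly algC[n2]}) (I : Type) (r : seq I) F :
  islin f -> f (\sum_(i <- r) F i) = \sum_(i <- r) f (F i).
Proof.
move=> hf; elim: r => [|x r IH]; first by rewrite !big_nil (lin0 hf).
by rewrite !big_cons -IH -(scale1r (F x)) hf !scale1r.
Qed.

Lemma lin_ext n1 n2 (f1 f2 : {mpoly algC[n1]} -> {mpoly algC[n2]}) :
  islin f1 -> islin f2 -> (forall m, f1 'X_[m] = f2 'X_[m]) -> forall p, f1 p = f2 p.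
Proof.
move=> h1 h2 hX p; rewrite (mpolyE p) !lin_sum //.
by apply: eq_bigr => m _; rewrite !linZ // hX.
Qed.

Lemma islin_sum n1 n2 (I : Type) (r : seq I) (F : I -> {mpoly algC[n1]} -> {mpoly algC[n2]}) :
  (forall i, islin (F i)) -> islin (fun p => \sum_(i <- r) F i p).
Proof.
move=> hF c x y; elim: r => [|i r IH]; first by rewrite !big_nil scaler0 addr0.
by rewrite !big_cons IH hF scalerDr addrACA.
Qed.

Lemma islin_scale n1 n2 (f : {mpoly algC[n1]} -> {mpoly algC[n2]}) a :
  islin f -> islin (fun p => a *: f p).
Proof. by move=> hf c x y; rewrite hf scalerDr !scalerA mulrC. Qed.

Lemma islin_comp n1 n2 n3 (f : {mpoly algC[n2]} -> {mpoly algC[n3]})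
  (g : {mpoly algC[n1]} -> {mpoly algC[n2]}) :
  islin f -> islin g -> islin (fun p => f (g p)).
Proof. by move=> hf hg c x y; rewrite hg hf. Qed.

Lemma xd_lin n (i j : 'I_n) : islin (fun p : {mpoly algC[n]} => 'X_i * mderiv j p).
Proof. by move=> c x y; rewrite mderivD mderivZ mulrDr scalerAr. Qed.

Lemma xdX n (i j : 'I_n) (m : 'X_{1..n}) :
  ('X_i : {mpoly algC[n]}) * mderiv j 'X_[m] = (m j)%:R *: 'X_[(U_(i) + (m - U_(j)))%MM].
Proof. by rewrite mderivX -scalerAr mpolyXD. Qed.

Lemma xdX_diag n (j : 'I_n) (m : 'X_{1..n}) :
  ('X_j : {mpoly algC[n]}) * mderiv j 'X_[m] = (m j)%:R *: 'X_[m].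
Proof.
rewrite xdX; have [->|nz] := eqVneq (m j) 0%N; first by rewrite !scale0r.
congr (_ *: 'X_[_]); apply/mnmP => i; rewrite mnmDE mnmBE mnm1E.
case: (eqVneq j i) => [<-|_] /=; last by rewrite add0n subn0.
by rewrite add1n subn1 prednK // lt0n.
Qed.

Definition tau k (u : Ubasis k) : Rbasis k :=
  match u with None => None | Some (i, b) => Some (i, if b then 0%R else 1%R) end.
Definition tauinv k (r : Rbasis k) : Ubasis k :=
  match r with None => None | Some (i, j) => Some (i, j == 0%R) end.

Lemma tauK k : cancel (@tau k) (@tauinv k).
Proof. by case => [[i []]|]. Qed.

Lemma tauinvK k : cancel (@tauinv k) (@tau k).
Proof.
case => [[i j]|] //=; case: eqP => [->|ne] //; congr (Some (i, _)).
move: j ne => [[|[|j]] lt] ne //=.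
  by exfalso; apply: ne; apply: val_inj.
by apply: val_inj.
Qed.

Definition gRU k e (j : 'I_(nvars (Rbasis k) e)) : 'I_(nvars (Ubasis k) e) :=
  vidx (tauinv (enum_val j).1) (enum_val j).2.
Definition gUR k e (j : 'I_(nvars (Ubasis k) e)) : 'I_(nvars (Rbasis k) e) :=
  vidx (tau (enum_val j).1) (enum_val j).2.

Lemma gRU_vidx k e r a : @gRU k e (vidx r a) = vidx (tauinv r) a.
Proof. by rewrite /gRU /vidx enum_rankK. Qed.
Lemma gUR_vidx k e u a : @gUR k e (vidx u a) = vidx (tau u) a.
Proof. by rewrite /gUR /vidx enum_rankK. Qed.

Lemma gRUK k e : cancel (@gRU k e) (@gUR k e).
Proof. by move=> j; rewrite {1}/gRU gUR_vidx tauinvK /vidx -surjective_pairing enum_valK. Qed.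
Lemma gURK k e : cancel (@gUR k e) (@gRU k e).
Proof. by move=> j; rewrite {1}/gUR gRU_vidx tauK /vidx -surjective_pairing enum_valK. Qed.

Lemma symAct_lin (T : finType) e (X : 'M[algC]_e) : islin (@symAct T e X).
Proof.
apply: islin_sum => t; apply: islin_sum => a; apply: islin_sum => b.
by apply: islin_scale; apply: xd_lin.
Qed.

Lemma rn_symAct k e X (p : SymEW (Ubasis k) e) :
  rn (@gRU k e) (symAct X p) = symAct X (rn (@gRU k e) p).
Proof.
have gh := @gRUK k e; have hg := @gURK k e; have L := rn_lin gh hg.
apply: (lin_ext (f1 := fun p => rn (@gRU k e) (symAct X p))
                (f2 := fun p => symAct X (rn (@gRU k e) p))).
- by apply: islin_comp; [exact: L | exact: symAct_lin].
- by apply: islin_comp; [exact: symAct_lin | exact: L].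
move=> m; rewrite rnX /symAct.
rewrite (reindex (@tau k)) /=; last first.
  by exists (@tauinv k) => u _; rewrite ?tauK ?tauinvK.
rewrite lin_sum; last exact: L.
apply: eq_bigr => t _; rewrite lin_sum; last exact: L.
apply: eq_bigr => a _; rewrite lin_sum; last exact: L.
apply: eq_bigr => b _; rewrite linZ; last exact: L.
rewrite /xvar !xdX linZ; last exact: L.
rewrite rnX renE gRU_vidx tauK.
by rewrite renD renB !(ren1 gh hg) !gUR_vidx.
Qed.

Definition Et k e (t : 'I_k -> algC) (p : SymEW (Ubasis k) e) : SymEW (Ubasis k) e :=
  \sum_(u : Ubasis k) \sum_(a < e) cartanU t u *: (xvar u a * mderiv (vidx u a) p).

Lemma Et_lin k e t : islin (@Et k e t).
Proof.
apply: islin_sum => u; apply: islin_sum => a.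
by apply: islin_scale; apply: xd_lin.
Qed.

Lemma Et_X k e t m : @Et k e t 'X_[m] =
  (\sum_(u : Ubasis k) cartanU t u * (degIn u m)%:R) *: 'X_[m].
Proof.
rewrite /Et scaler_suml; apply: eq_bigr => u _.
rewrite /degIn natr_sum mulr_sumr scaler_suml; apply: eq_bigr => a _.
by rewrite /xvar xdX_diag scalerA.
Qed.

Lemma Et_coef k e t p m : (@Et k e t p)@_m =
  (\sum_(u : Ubasis k) cartanU t u * (degIn u m)%:R) * p@_m.
Proof.
rewrite {1}(mpolyE p) lin_sum; last exact: Et_lin.
under eq_bigr => m' _ do rewrite (linZ _ _ (@Et_lin k e t)) Et_X scalerA.
rewrite raddf_sum /=.
under eq_bigr => m' _ do rewrite mcoeffZ mcoeffX.
rewrite (sum_delta (fun m' => p@_m' * (\sum_(u : Ubasis k) cartanU t u * (degIn u m')%:R))) ?msupp_uniq //.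
case: (boolP (m \in msupp p)) => H; first by rewrite mul1r mulrC.
by rewrite mul0r memN_msupp_eq0 // mulr0.
Qed.

Lemma wE k (t : 'I_k -> algC) (d : Ubasis k -> algC) :
  \sum_(u : Ubasis k) cartanU t u * d u =
  \sum_i t i * (d (Some (i, false)) - d (Some (i, true))).
Proof.
rewrite big_optionS /= mul0r add0r.
have -> : \sum_(x : 'I_k * bool) cartanU t (Some x) * d (Some x) =
    \sum_i \sum_b cartanU t (Some (i, b)) * d (Some (i, b)).
  by rewrite pair_bigA; apply: eq_bigr => [[i b]] _.
apply: eq_bigr => i _; rewrite big_bool /=.
by rewrite mulrBr mulNr addrC.
Qed.

Definition Dm k e (i : 'I_k) (m : 'X_{1..nvars (Ubasis k) e}) : algC :=
  (degIn (Some (i, false)) m)%:R - (degIn (Some (i, true)) m)%:R.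

Lemma cartan_coef k e t (f : Vspace k e) v m :
  ((cartanAct t f) v)@_m =
  (\sum_i t i * (Dm i m + ((v i)%:R - 2^-1))) * (f v)@_m.
Proof.
rewrite ffunE mcoeffD mcoeffZ.
have := Et_coef t (f v) m; rewrite /Et => ->.
rewrite (wE t (fun u => (degIn u m)%:R)) -mulrDl -big_split /=.
congr (_ * _); apply: eq_bigr => i _.
by rewrite /Dm [RHS]mulrDr [_ * t i]mulrC.
Qed.

Lemma sum_pick k (G : 'I_k -> algC) i : \sum_j (j == i)%:R * G j = G i.
Proof.
rewrite (bigD1 i) //= eqxx mul1r big1 ?addr0 // => j /negbTE ->.
by rewrite mul0r.
Qed.

Lemma Vweight_cond k e chi (f : Vspace k e) : Vweight chi f <->
  (forall v m, (f v)@_m != 0 -> forall i, Dm i m + ((v i)%:R - 2^-1) = chi i).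
Proof.
split.
  move=> W v m nz i; have := W (fun j => (j == i)%:R).
  move/(congr1 (fun F : Vspace k e => (F v)@_m)).
  rewrite cartan_coef ffunE mcoeffZ sum_pick.
  under [X in _ = X * _]eq_bigr => j _ do rewrite mulrC.
  by rewrite sum_pick => /(mulIf nz).
move=> C t; apply/ffunP => v; apply/mpolyP => m.
rewrite cartan_coef ffunE mcoeffZ.
case: (eqVneq ((f v)@_m) 0) => [->|nz]; first by rewrite !mulr0.
congr (_ * _); apply: eq_bigr => i _; by rewrite C // mulrC.
Qed.

Lemma cond_iff (b : bool) (d1 d0 c : algC) :
  (d1 - d0 + ((~~ b)%:R - 2^-1) = c) <-> (d1 = d0 + (c + b%:R - 2^-1)).
Proof.
have h2 : (2 : algC) != 0 by rewrite pnatr_eq0.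
split => [<-|->]; case: b => /=; field; by [].
Qed.

Lemma deg_ren k e u (m' : 'X_{1..nvars (Rbasis k) e}) :
  degIn u (ren (@gUR k e) m') = degIn (tau u) m'.
Proof. by apply: eq_bigr => a _; rewrite renE gUR_vidx. Qed.

Definition compl k (v : Ik k) : Ik k := [ffun i => ~~ v i].
Lemma complK k : involutive (@compl k).
Proof. by move=> v; apply/ffunP => i; rewrite !ffunE negbK. Qed.

Definition phi k e (f : Vspace k e) : Rspace k e := [ffun v => rn (@gRU k e) (f (compl v))].
Definition psi k e (y : Rspace k e) : Vspace k e := [ffun v => rn (@gUR k e) (y (compl v))].

Unset Implicit Arguments.

Theorem mainTheorem11 (e k : nat) (hk : (1 <= k)%N) (chi : 'I_k -> algC)
  (hchi : forall i, chi i - 2^-1 \is a Num.int) :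
  @Hiso e (Vspace k e) (Rspace k e) (@Vact k e) (@Ract k e)
    (@Vweight k e chi) (@RHSsub k e chi).
Proof.
have gh := @gRUK k e; have hg := @gURK k e.
exists (@phi k e); split.
- move=> x /Vweight_cond C v m'; rewrite mcoeff_msupp ffunE (rn_coef gh hg) => nz i.
  have := C _ _ nz i; rewrite /Dm !deg_ren /= ffunE.
  by move/cond_iff.
- move=> y Y; exists (psi y).
    apply/Vweight_cond => v m; rewrite ffunE (rn_coef hg gh) => nz i.
    have Em : m = ren (@gUR k e) (ren (@gRU k e) m) by rewrite (renK hg).
    rewrite /Dm Em !deg_ren /=.
    have := Y (compl v) (ren (@gRU k e) m); rewrite mcoeff_msupp => /(_ nz i).
    by rewrite ffunE => /cond_iff; rewrite negbK.
  by apply/ffunP => v; rewrite !ffunE complK (rnK hg gh).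
- move=> x y _ _ E; apply/ffunP => v.
  have := congr1 (fun F : Rspace k e => F (compl v)) E.
  by rewrite !ffunE complK => /(can_inj (rnK gh hg)).
- by move=> c x y _ _; apply/ffunP => v; rewrite !ffunE (rn_lin gh hg).
- by move=> X x _; apply/ffunP => v; rewrite !ffunE rn_symAct.
Qed.
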